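(* For each $n\in\mathbb{N}$, if a labelled formula $w:\phi$ (with $\phi\in\mathcal{L}^1$) is derivable in $\mathsf{Ldm}_{n}^{1}\mathsf{L}$, then it has a derivation in $\mathsf{Ldm}_{n}^{1}\mathsf{L}$ in which every sequent is forestlike.
   Context: Single-agent setting: $Ag=\{1\}$. Formulas $\phi ::= p \mid \overline{p} \mid (\phi\wedge\phi) \mid (\phi\vee\phi) \mid \Box\phi \mid \Diamond\phi \mid [1]\phi \mid \langle 1\rangle\phi$. A labelled sequent $\mathcal{R},\Gamma$ consists of a multiset $\mathcal{R}$ of relational atoms $\mathcal{R}_1xy$ and a multiset $\Gamma$ of labelled formulas $x:\phi$. Calculus $\mathsf{Ldm}_{n}^{1}\mathsf{L}$ (premise(s) / conclusion; derivations are finite trees with $(\mathsf{id})$ leaves): $(\mathsf{id})$: / $\mathcal{R}, w:p, w:\overline{p},\Gamma$. $(\wedge)$: $\mathcal{R}, w:\phi\wedge\psi, w:\phi,\Gamma$ and $\mathcal{R}, w:\phi\wedge\psi, w:\psi,\Gamma$ / $\mathcal{R}, w:\phi\wedge\psi,\Gamma$. $(\vee)$: $\mathcal{R}, w:\phi\vee\psi, w:\phi, w:\psi,\Gamma$ / $\mathcal{R}, w:\phi\vee\psi,\Gamma$. $(\Box)$: $\mathcal{R}, w:\Box\phi, v:\phi,\Gamma$ / $\mathcal{R}, w:\Box\phi,\Gamma$ ($v$ fresh). $(\Diamond)$: $\mathcal{R}, w:\Diamond\phi, u:\phi,\Gamma$ / $\mathcal{R}, w:\Diamond\phi,\Gamma$.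 $(\mathsf{IOA})$: $\mathcal{R},\mathcal{R}_1uv,\Gamma$ / $\mathcal{R},\Gamma$ ($v$ fresh). $([1])$: $\mathcal{R},\mathcal{R}_1wv, w:[1]\phi, v:\phi,\Gamma$ / $\mathcal{R}, w:[1]\phi,\Gamma$ ($v$ fresh). $(\mathsf{Pr}_1)$: $\mathcal{R}, w:\langle 1\rangle\phi, u:\phi,\Gamma$ / $\mathcal{R}, w:\langle 1\rangle\phi,\Gamma$, applicable only if $w=u$ or there are labels $w=z_0,\dots,z_k=u$ ($k\ge1$) with $\mathcal{R}_1z_lz_{l+1}\in\mathcal{R}$ or $\mathcal{R}_1z_{l+1}z_l\in\mathcal{R}$ for each $l<k$. $(\mathsf{APC}^1_n)$ (only if $n>0$): premises $\mathcal{R},\mathcal{R}_1w_kw_j,\Gamma$ for all $0\le k\le n-1$, $k+1\le j\le n$ / $\mathcal{R},\Gamma$. ''Fresh'' means not occurring in the conclusion. Forestlike sequents. The graph $G(\Lambda)$ of a sequent $\Lambda$ has the labels of $\Lambda$ as vertices and a directed edge $(x,y)$ for each $\mathcal{R}_1xy\in\Lambda$. A graph is a tree iff it has a node (root) with exactly one directed path to every other node; a forest is a disjoint union of trees. $\Lambda$ is forestlike iff $G(\Lambda)$ is a forest. *)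

(* Defs.v *)
From Stdlib Require Import List Arith Relations.
Import ListNotations.

(* Formulas of L^1 in negation normal form. *)
Inductive form : Type :=
| Var  : nat -> form
| NVar : nat -> form
| And  : form -> form -> form
| Or   : form -> form -> form
| Box  : form -> form
| Dia  : form -> form
| Stit : form -> form
| DStit : form -> form.

Definition label := nat.

(* A labelled sequent R, Gamma: multisets represented by lists.
   fst = relational atoms R_1 x y (as pairs (x,y)),
   snd = labelled formulas x : phi (as pairs (x,phi)). *)
Definition sequent : Type := (list (label * label) * list (label * form))%type.

Definition labels (S : sequent) : list label :=
  flat_map (fun e => [fst e; snd e]) (fst S) ++ map fst (snd S).

Definition fresh (v : label) (S : sequent) : Prop := ~ In v (labels S).

Definition linked (R : list (label * label)) : label -> label -> Prop :=
  clos_refl_trans label (fun x y => In (x, y) R \/ In (y, x) R).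

(* derivP n P S : S has a derivation in Ldm_n^1 L all of whose sequents satisfy P.
   Multiset rules are stated on list representatives: the principal formula is
   required to occur (In) in the conclusion, and premises add the auxiliary
   atoms in front. *)
Inductive derivP (n : nat) (P : sequent -> Prop) : sequent -> Prop :=
| d_id : forall R G w p,
    P (R, G) -> In (w, Var p) G -> In (w, NVar p) G -> derivP n P (R, G)
| d_and : forall R G w A B,
    P (R, G) -> In (w, And A B) G ->
    derivP n P (R, (w, A) :: G) -> derivP n P (R, (w, B) :: G) ->
    derivP n P (R, G)
| d_or : forall R G w A B,
    P (R, G) -> In (w, Or A B) G ->
    derivP n P (R, (w, A) :: (w, B) :: G) -> derivP n P (R, G)
| d_box : forall R G w v A,
    P (R, G) -> In (w, Box A) G -> fresh v (R, G) ->
    derivP n P (R, (v, A) :: G) -> derivP n P (R, G)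
| d_dia : forall R G w u A,
    P (R, G) -> In (w, Dia A) G ->
    derivP n P (R, (u, A) :: G) -> derivP n P (R, G)
| d_ioa : forall R G u v,
    P (R, G) -> fresh v (R, G) ->
    derivP n P ((u, v) :: R, G) -> derivP n P (R, G)
| d_stit : forall R G w v A,
    P (R, G) -> In (w, Stit A) G -> fresh v (R, G) ->
    derivP n P ((w, v) :: R, (v, A) :: G) -> derivP n P (R, G)
| d_pr : forall R G w u A,
    P (R, G) -> In (w, DStit A) G -> linked R w u ->
    derivP n P (R, (u, A) :: G) -> derivP n P (R, G)
| d_apc : forall R G (ws : nat -> label),
    P (R, G) -> 0 < n ->
    (forall k j, k < j -> j <= n -> derivP n P ((ws k, ws j) :: R, G)) ->
    derivP n P (R, G).

Definition derivable (n : nat) (S : sequent) : Prop := derivP n (fun _ => True) S.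

(* Directed walks in the multigraph G(S): a list of indices of R_1-atoms in R. *)
Fixpoint walk (R : list (label * label)) (x y : label) (es : list nat) : Prop :=
  match es with
  | [] => x = y
  | i :: es' => exists z, nth_error R i = Some (x, z) /\ walk R z y es'
  end.

Definition unique_path (R : list (label * label)) (x y : label) : Prop :=
  exists es, walk R x y es /\ forall es', walk R x y es' -> es' = es.

(* G(S) is a forest: its vertices split into classes (comp) with no edge between
   distinct classes, and each class is a tree: it has a root with exactly one
   directed path to every other vertex of the class. *)
Definition forestlike (S : sequent) : Prop :=
  exists comp : label -> nat,
    (forall x y, In (x, y) (fst S) -> comp x = comp y) /\
    (forall c, (exists x, In x (labels S) /\ comp x = c) ->
       exists r, In r (labels S) /\ comp r = c /\
         forall x, In x (labels S) -> comp x = c -> x <> r ->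
           unique_path (fst S) r x).

(* Main.v *)
Require Import Defs.
From Stdlib Require Import List.
Import ListNotations.
From Stdlib Require Import Arith Relations Lia Classical.

Definition rlabels (R : list (label*label)) : list label :=
  flat_map (fun e => [fst e; snd e]) R.

Fixpoint parent (R : list (label*label)) (x : label) : option label :=
  match R with
  | [] => None
  | (a,b)::R' => if Nat.eqb b x then Some a else parent R' x
  end.

Lemma parent_In R x p : parent R x = Some p -> In (p,x) R.
Proof.
  induction R as [|[a b] R IH]; simpl; [discriminate|].
  destruct (Nat.eqb_spec b x); intros H.
  - inversion H; subst; left; auto.
  - right; auto.
Qed.

Lemma parent_None R x : parent R x = None -> ~ In x (map snd R).
Proof.
  induction R as [|[a b] R IH]; simpl; [auto|].
  destruct (Nat.eqb_spec b x); [discriminate|].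
  intros H [E|E]; [congruence | exact (IH H E)].
Qed.

Lemma parent_Some R x p : NoDup (map snd R) -> In (p,x) R -> parent R x = Some p.
Proof.
  induction R as [|[a b] R IH]; simpl; [tauto|].
  intros ND [E|E]; inversion ND as [|? ? Hn Hnd]; subst.
  - inversion E; subst. rewrite Nat.eqb_refl. auto.
  - destruct (Nat.eqb_spec b x).
    + subst; exfalso; apply Hn; apply (in_map snd) in E; exact E.
    + auto.
Qed.

Fixpoint root_f R (f : nat) x :=
  match f with
  | 0 => x
  | S f => match parent R x with None => x | Some p => root_f R f p end
  end.

Definition rankok (R : list (label*label)) (rk : label -> nat) :=
  forall x y, In (x,y) R -> rk x < rk y.

Lemma root_f_stable R rk : rankok R rk ->
  forall f x f', rk x <= f -> rk x <= f' -> root_f R f x = root_f R f' x.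
Proof.
  intros Hr. induction f as [|f IH]; intros x f' H1 H2.
  - simpl. destruct f'; simpl; auto.
    destruct (parent R x) eqn:E; auto. apply parent_In, Hr in E. lia.
  - destruct f' as [|f']; simpl.
    + destruct (parent R x) eqn:E; auto. apply parent_In, Hr in E. lia.
    + destruct (parent R x) eqn:E; auto. apply parent_In, Hr in E as E'.
      apply IH; lia.
Qed.

Definition root R rk x := root_f R (rk x) x.

Lemma root_parent R rk x p : rankok R rk -> parent R x = Some p ->
  root R rk x = root R rk p.
Proof.
  intros Hr E. unfold root. pose proof (Hr _ _ (parent_In _ _ _ E)) as Hlt.
  destruct (rk x) as [|m] eqn:Ex; [lia|]. simpl. rewrite E.
  apply (root_f_stable R rk Hr); lia.
Qed.

Lemma root_none R rk x : parent R x = None -> root R rk x = x.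
Proof. intros H. unfold root. destruct (rk x); simpl; [auto| rewrite H; auto]. Qed.

Lemma root_noparent_aux R rk : rankok R rk ->
  forall m x, rk x < m -> parent R (root R rk x) = None.
Proof.
  intros Hr. induction m; intros x Hx; [lia|].
  destruct (parent R x) eqn:E.
  - rewrite (root_parent R rk x l Hr E). apply IHm.
    pose proof (Hr _ _ (parent_In _ _ _ E)); lia.
  - rewrite root_none; auto.
Qed.

Lemma root_noparent R rk x : rankok R rk -> parent R (root R rk x) = None.
Proof. intros Hr. apply (root_noparent_aux R rk Hr (S (rk x))). lia. Qed.

Lemma root_root R rk x : rankok R rk -> root R rk (root R rk x) = root R rk x.
Proof. intros Hr. apply root_none, root_noparent; auto. Qed.

Lemma walk_app R a b c es1 es2 : walk R a b es1 -> walk R b c es2 -> walk R a c (es1 ++ es2).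
Proof.
  revert a; induction es1 as [|i es1 IH]; simpl; intros a H1 H2.
  - subst; auto.
  - destruct H1 as [z [H H']]. exists z; split; [auto | eapply IH; eauto].
Qed.

Lemma walk_snoc_inv R a x es i : walk R a x (es ++ [i]) ->
  exists p, walk R a p es /\ nth_error R i = Some (p,x).
Proof.
  revert a; induction es as [|j es IH]; simpl; intros a H.
  - destruct H as [z [H1 H2]]; subst; exists a; simpl; auto.
  - destruct H as [z [H1 H2]]. destruct (IH z H2) as [p [Hp1 Hp2]].
    exists p; split; [exists z; auto | auto].
Qed.

Lemma root_walk_aux R rk : rankok R rk ->
  forall m x, rk x < m -> exists es, walk R (root R rk x) x es.
Proof.
  intros Hr. induction m; intros x Hx; [lia|].
  destruct (parent R x) eqn:E.
  - rewrite (root_parent R rk x l Hr E).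
    pose proof (parent_In _ _ _ E) as Hin.
    destruct (IHm l) as [es Hes]. { pose proof (Hr _ _ Hin); lia. }
    destruct (In_nth_error _ _ Hin) as [i Hi].
    exists (es ++ [i]). eapply walk_app; eauto. simpl. exists x; auto.
  - rewrite root_none; auto. exists []. simpl. auto.
Qed.

Lemma root_walk R rk x : rankok R rk -> exists es, walk R (root R rk x) x es.
Proof. intros Hr. apply (root_walk_aux R rk Hr (S (rk x))). lia. Qed.

Lemma nodup_idx (R : list (label*label)) i j p q x : NoDup (map snd R) ->
  nth_error R i = Some (p,x) -> nth_error R j = Some (q,x) -> i = j.
Proof.
  intros ND Hi Hj.
  apply (map_nth_error (@snd label label)) in Hi. apply (map_nth_error (@snd label label)) in Hj.
  apply (proj1 (NoDup_nth_error _) ND).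
  - apply nth_error_Some. rewrite Hi. discriminate.
  - rewrite Hi, Hj. reflexivity.
Qed.

Lemma walk_unique (R : list (label*label)) a : NoDup (map snd R) -> parent R a = None ->
  forall es1 x es2, walk R a x es1 -> walk R a x es2 -> es1 = es2.
Proof.
  intros ND Ha es1. induction es1 as [|i es1 IH] using rev_ind; intros x es2 H1 H2.
  - simpl in H1; subst x.
    induction es2 as [|j es2 _] using rev_ind; auto.
    apply walk_snoc_inv in H2. destruct H2 as [p [_ Hn]].
    apply nth_error_In in Hn. apply (parent_Some _ _ _ ND) in Hn. congruence.
  - apply walk_snoc_inv in H1 as [p [Hp Hn]].
    induction es2 as [|j es2 _] using rev_ind.
    + simpl in H2; subst x. apply nth_error_In in Hn.
      apply (parent_Some _ _ _ ND) in Hn; congruence.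
    + apply walk_snoc_inv in H2 as [q [Hq Hm]].
      assert (i = j) by (eapply nodup_idx; eauto). subst j.
      rewrite Hn in Hm; inversion Hm; subst q. f_equal. eapply IH; eauto.
Qed.

Definition Inv (R : list (label*label)) := NoDup (map snd R) /\ exists rk, rankok R rk.

Lemma walk_start R a b es : walk R a b es -> a = b \/ In a (rlabels R).
Proof.
  destruct es; simpl; [auto|].
  intros [z [H _]]. right. apply nth_error_In in H. unfold rlabels.
  apply in_flat_map. exists (a,z). simpl; auto.
Qed.

Lemma root_edge R rk x y : NoDup (map snd R) -> rankok R rk -> In (x,y) R ->
  root R rk x = root R rk y.
Proof. intros ND Hr H. symmetry. apply root_parent; auto. apply parent_Some; auto. Qed.

Lemma Inv_forest R G : Inv R -> forestlike (R, G).
Proof.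
  intros [ND [rk Hr]]. exists (root R rk). split.
  - intros x y H. simpl in H. apply root_edge; auto.
  - intros c [x [Hx Hc]]. exists (root R rk x). split; [|split].
    + destruct (root_walk R rk x Hr) as [es Hw].
      destruct (walk_start _ _ _ _ Hw) as [E|E].
      * rewrite E; auto.
      * unfold labels; simpl; apply in_or_app; left; exact E.
    + rewrite root_root; auto.
    + intros y Hy Hyc Hne.
      assert (E: root R rk x = root R rk y) by congruence. rewrite E.
      destruct (root_walk R rk y Hr) as [es Hw].
      exists es. split; auto. intros es' H'. simpl in H'.
      eapply walk_unique; eauto. apply root_noparent; auto.
Qed.

Lemma linked_sym R a b : linked R a b -> linked R b a.
Proof.
  intros H. induction H.
  - apply rt_step. tauto.
  - apply rt_refl.
  - eapply rt_trans; eauto.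
Qed.

Lemma walk_linked R a b es : walk R a b es -> linked R a b.
Proof.
  revert a; induction es; simpl; intros x H.
  - subst; apply rt_refl.
  - destruct H as [z [H1 H2]]. apply rt_trans with z.
    + apply rt_step; left; eapply nth_error_In; eauto.
    + apply IHes; exact H2.
Qed.

Lemma root_linked R rk x : rankok R rk -> linked R (root R rk x) x.
Proof. intros Hr. destruct (root_walk R rk x Hr) as [es H]. eapply walk_linked; eauto. Qed.

Lemma linked_mono R R' a b : incl R R' -> linked R a b -> linked R' a b.
Proof.
  intros Hi H. induction H.
  - apply rt_step. destruct H; [left|right]; auto.
  - apply rt_refl.
  - eapply rt_trans; eauto.
Qed.

Lemma linked_cons R R' x y : (forall a b, linked R a b -> linked R' a b) ->
  linked R' x y -> forall a b, linked ((x,y)::R) a b -> linked R' a b.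
Proof.
  intros HL Hxy a b H. induction H as [a b H| a | a b c _ IH1 _ IH2].
  - destruct H as [H|H]; simpl in H; destruct H as [H|H].
    + inversion H; subst; auto.
    + apply HL, rt_step; auto.
    + inversion H; subst; apply linked_sym; auto.
    + apply HL, rt_step; auto.
  - apply rt_refl.
  - eapply rt_trans; eauto.
Qed.

Lemma Inv_fresh R u v : Inv R -> ~ In v (rlabels R) -> u <> v -> Inv ((u,v)::R).
Proof.
  intros [ND [rk Hr]] Hv Hne. split.
  - simpl; constructor; auto. intro Hin. apply Hv.
    apply in_map_iff in Hin as [[a b] [E Hab]]. simpl in E; subst.
    unfold rlabels; apply in_flat_map; exists (a,v); simpl; auto.
  - exists (fun x => if Nat.eqb x v then S (rk u) else rk x).
    intros x y [E|E].
    + injection E as E1 E2. rewrite <- E1, <- E2. rewrite Nat.eqb_refl.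
      rewrite (proj2 (Nat.eqb_neq u v) Hne). lia.
    + assert (x <> v). { intro; subst; apply Hv; unfold rlabels; apply in_flat_map;
        exists (v,y); simpl; auto. }
      assert (y <> v). { intro; subst; apply Hv; unfold rlabels; apply in_flat_map;
        exists (x,v); simpl; auto. }
      rewrite (proj2 (Nat.eqb_neq x v) H), (proj2 (Nat.eqb_neq y v) H0).
      apply Hr; auto.
Qed.

Lemma Inv_join R rk a b : NoDup (map snd R) -> rankok R rk -> parent R b = None ->
  root R rk a = a -> root R rk b = b -> a <> b -> Inv ((a,b)::R).
Proof.
  intros ND Hr Hb Ha Hbb Hne. split.
  - simpl; constructor; [apply parent_None; auto | auto].
  - exists (fun x => if Nat.eqb (root R rk x) b then rk x + rk a + 1 else rk x).
    intros x y [E|E].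
    + injection E as E1 E2. rewrite <- E1, <- E2. rewrite Ha, Hbb, Nat.eqb_refl.
      rewrite (proj2 (Nat.eqb_neq a b) Hne). lia.
    + rewrite (root_edge R rk x y ND Hr E). pose proof (Hr _ _ E).
      destruct (Nat.eqb (root R rk y) b); lia.
Qed.

Lemma incl_labels_cons R G x R' : incl (rlabels R') (labels (R,G)) ->
  incl (rlabels R') (labels (R, x::G)).
Proof.
  unfold incl, labels; simpl; intros H z Hz. specialize (H z Hz).
  apply in_app_iff in H; apply in_app_iff. destruct H; [left|right; simpl; right]; auto.
Qed.

Lemma in_labels_rcons R G e z : In z (labels (R,G)) -> In z (labels (e::R,G)).
Proof.
  unfold labels; simpl; intros H. apply in_app_iff in H.
  destruct H; [right; right; apply in_app_iff; left | right; right; apply in_app_iff; right]; auto.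
Qed.

Lemma incl_labels_rcons R G e R' : incl (rlabels R') (labels (R,G)) ->
  incl (rlabels R') (labels (e::R, G)).
Proof. intros H z Hz. apply in_labels_rcons; auto. Qed.

Lemma incl_labels_edge R G R' x y : incl (rlabels R') (labels (R,G)) ->
  incl (rlabels ((x,y)::R')) (labels ((x,y)::R, G)).
Proof.
  intros H z Hz. unfold rlabels in Hz; simpl in Hz.
  destruct Hz as [E|[E|E]].
  - subst; unfold labels; simpl; auto.
  - subst; unfold labels; simpl; auto.
  - apply in_labels_rcons, H. exact E.
Qed.

Lemma fresh_sub R G R' v : incl (rlabels R') (labels (R,G)) -> fresh v (R,G) -> fresh v (R',G).
Proof.
  unfold fresh; intros H F Hin; apply F. unfold labels in Hin; simpl in Hin.
  apply in_app_iff in Hin. destruct Hin.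
  - apply H; auto.
  - unfold labels; simpl; apply in_app_iff; right; auto.
Qed.

Lemma sim n : forall S, derivP n (fun _ => True) S -> forall R', Inv R' ->
  (forall a b, linked (fst S) a b -> linked R' a b) ->
  incl (rlabels R') (labels S) -> derivP n forestlike (R', snd S).
Proof.
  intros S H.
  induction H as [R G w p HP Hw Hnw
  |R G w A B HP Hin D1 IH1 D2 IH2
  |R G w A B HP Hin D IH
  |R G w v A HP Hin Hf D IH
  |R G w u A HP Hin D IH
  |R G u v HP Hf D IH
  |R G w v A HP Hin Hf D IH
  |R G w u A HP Hin Hl D IH
  |R G ws HP Hn D IH]; intros R' HI HL HS; simpl in HL; simpl.
  - eapply d_id; eauto. apply Inv_forest; auto.
  - eapply d_and; [apply Inv_forest; auto | eauto | apply IH1 | apply IH2]; auto;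
      apply incl_labels_cons; auto.
  - eapply d_or; [apply Inv_forest; auto | eauto | apply IH]; auto.
    do 2 apply incl_labels_cons; auto.
  - eapply d_box; [apply Inv_forest; auto | eauto | eapply fresh_sub; eauto | apply IH]; auto.
    apply incl_labels_cons; auto.
  - eapply d_dia; [apply Inv_forest; auto | eauto | apply IH]; auto.
    apply incl_labels_cons; auto.
  - destruct (Nat.eq_dec u v) as [E|Ne].
    + subst. apply IH; auto.
      * intros a b Hab. apply (linked_cons R R' v v HL (rt_refl _ _ v)). exact Hab.
      * apply incl_labels_rcons; auto.
    + apply d_ioa with u v; [apply Inv_forest; auto | eapply fresh_sub; eauto | apply IH].
      * apply Inv_fresh; [auto | intro Hv; apply Hf; apply HS; auto | auto].
      * intros a b Hab. refine (linked_cons R ((u,v)::R') u v _ _ a b Hab).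
        -- intros a' b' H'. apply linked_mono with R'; [intros z Hz; right; auto | auto].
        -- apply rt_step; left; left; auto.
      * apply incl_labels_edge; auto.
  - assert (Ne: w <> v).
    { intro E; subst. apply Hf. unfold labels; simpl. apply in_app_iff; right.
      apply in_map_iff. exists (v, Stit A); auto. }
    eapply d_stit; [apply Inv_forest; auto | eauto | eapply fresh_sub; eauto | apply IH].
    * apply Inv_fresh; [auto | intro Hv; apply Hf; apply HS; auto | auto].
    * intros a b Hab. refine (linked_cons R ((w,v)::R') w v _ _ a b Hab).
      -- intros a' b' H'. apply linked_mono with R'; [intros z Hz; right; auto | auto].
      -- apply rt_step; left; left; auto.
    * apply incl_labels_cons, incl_labels_edge; auto.
  - eapply d_pr; [apply Inv_forest; auto | eauto | apply HL; exact Hl | apply IH]; auto.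
    apply incl_labels_cons; auto.
  - pose proof HI as [ND [rk Hr]].
    destruct (classic (exists k j, k < j /\ j <= n /\ root R' rk (ws k) = root R' rk (ws j)))
      as [[k [j [Hkj [Hjn Heq]]]] | Hno].
    + apply (IH k j Hkj Hjn R' HI).
      * intros a b Hab. refine (linked_cons R R' (ws k) (ws j) HL _ a b Hab).
        apply rt_trans with (root R' rk (ws k)).
        -- apply linked_sym, root_linked; auto.
        -- rewrite Heq. apply root_linked; auto.
      * apply incl_labels_rcons; auto.
    + apply d_apc with (fun i => root R' rk (ws i)); [apply Inv_forest; auto | auto |].
      intros k j Hkj Hjn. apply (IH k j Hkj Hjn).
      * apply (Inv_join R' rk); auto.
        -- apply root_noparent; auto.
        -- apply root_root; auto.
        -- apply root_root; auto.
        -- intro E. apply Hno. exists k, j. auto.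
      * intros a b Hab. simpl in Hab.
        assert (HM: forall a' b', linked R' a' b' ->
                  linked ((root R' rk (ws k), root R' rk (ws j)) :: R') a' b').
        { intros a' b' H'. apply linked_mono with R'; [intros z Hz; right; auto | auto]. }
        refine (linked_cons R _ (ws k) (ws j) (fun a b h => HM a b (HL a b h)) _ a b Hab).
        apply rt_trans with (root R' rk (ws k)).
        -- apply HM, linked_sym, root_linked; auto.
        -- apply rt_trans with (root R' rk (ws j)).
           ++ apply rt_step; left; left; auto.
           ++ apply HM, root_linked; auto.
      * intros z Hz. unfold rlabels in Hz; simpl in Hz.
        destruct Hz as [E|[E|E]].
        -- subst z. destruct (root_walk R' rk (ws k) Hr) as [es Hw].
           destruct (walk_start _ _ _ _ Hw) as [E|E].
           ++ rewrite E. unfold labels; simpl; auto.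
           ++ apply in_labels_rcons, HS; exact E.
        -- subst z. destruct (root_walk R' rk (ws j) Hr) as [es Hw].
           destruct (walk_start _ _ _ _ Hw) as [E|E].
           ++ rewrite E. unfold labels; simpl; auto.
           ++ apply in_labels_rcons, HS; exact E.
        -- apply in_labels_rcons, HS; exact E.
Qed.

Theorem corollary2 : forall (n : nat) (w : label) (phi : form),
  derivable n ([], [(w, phi)]) ->
  derivP n forestlike ([], [(w, phi)]).
Proof.
  intros n w phi H.
  apply (sim n _ H []).
  - split; [constructor | exists (fun _ => 0); intros x y Hx; destruct Hx].
  - simpl; auto.
  - intros z Hz; destruct Hz.
Qed.
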